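(* Let $\Gamma=\langle g_1,\dots,g_n\mid r_0=e,r_1,\dots,r_m,\dots\rangle$ be a finitely generated group, where the relators $r_i$ are words in the free group $F_n=\langle g_1,\dots,g_n\rangle$ and $r_0=e$. For each $i$ let $\varphi_i\in\mathrm{Hom}_{\mathcal{H}}([n],[n+1])$ be the morphism corresponding to $(g_1,\dots,g_n,r_i)\in F_n^{\times(n+1)}$. Let $h^{[n]}=\mathrm{Hom}_{\mathcal{H}}([n],-)\colon\mathcal{H}\to\mathrm{Sets}$, and let $h^{[n]}/\{\varphi_i\}$ be the coequalizer in the category of functors $\mathcal{H}\to\mathrm{Sets}$ of the family of natural transformations $h^{[n+1]}\Rightarrow h^{[n]}$, $f\mapsto f\circ\varphi_i$. Then the functor $[\Gamma]\colon\mathcal{H}\to\mathrm{Sets}$ is isomorphic to $h^{[n]}/\{\varphi_i\}$.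
   Context: $\mathcal{H}$ is the PROP of cocommutative Hopf algebras: objects $[n]$, $n\in\mathbb{N}$, $[n]\otimes[m]=[n+m]$, morphisms generated by $\mu,\Delta,S,\eta,\varepsilon,\tau$ subject exactly to the cocommutative Hopf algebra axioms. There is an identification $\mathrm{Hom}_{\mathcal{H}}([n],[m])\simeq F_n^{\times m}$ (equivalently $\mathcal{H}$ is equivalent to the opposite of the category of finitely generated free groups, a morphism $[n]\to[m]$ corresponding to a homomorphism $F_m\to F_n$, i.e. to the tuple $(w_1,\dots,w_m)$ of images of the generators). Under it, composition corresponds to substitution of words. For a group $\Gamma$, $[\Gamma]\colon\mathcal{H}\to\mathrm{Sets}$ sends $[m]$ to $\Gamma^{\times m}$ and the morphism $(w_1,\dots,w_m)\in F_n^{\times m}$ to the map $\Gamma^{n}\to\Gamma^{m}$, $(\gamma_1,\dots,\gamma_n)\mapsto(w_1(\gamma_1,\dots,\gamma_n),\dots,w_m(\gamma_1,\dots,\gamma_n))$ (this is the set of group-like elements of the functor $[m]\mapsto k[\Gamma]^{\otimes m}$). The coequalizer of a family of parallel maps is the universal map making all of them equal. *)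

(* Defs.v *)
From HB Require Import structures.
From mathcomp Require Import all_boot.
Set Implicit Arguments. Unset Strict Implicit. Unset Printing Implicit Defensive.

(* A letter is a generator index together with a flag: false = g_i, true = g_i^-1. *)
Definition letter (n : nat) := ('I_n * bool)%type.
Definition linv n (x : letter n) : letter n := (x.1, ~~ x.2).
Definition word n := seq (letter n).
Definition winv n (w : word n) : word n := rev (map (@linv n) w).

Definition nadj n (a b : letter n) : bool := b != linv a.
Definition reducedb n (w : word n) : bool :=
  if w is x :: w' then path (@nadj n) x w' else true.

Definition push n (x : letter n) (w : word n) : word n :=
  if w is y :: w' then (if y == linv x then w' else x :: w) else [:: x].
Definition reduce n (w : word n) : word n := foldr (@push n) [::] w.

Lemma reducedb_push n (x : letter n) (w : word n) :
  reducedb w -> reducedb (push x w).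
Proof.
case: w => [|y w] //= Hw.
case: ifP => [_|/negbT Hy].
  by case: w Hw => //= z w /andP[_ ->].
by rewrite /= /nadj Hy Hw.
Qed.

Lemma reduce_reduced n (w : word n) : reducedb (reduce w).
Proof. by elim: w => [|x w IH] //=; apply: reducedb_push. Qed.

Definition FG n := {w : word n | reducedb w}.
Definition mkFG n (w : word n) : FG n := exist _ (reduce w) (reduce_reduced w).
Definition FGe n : FG n := exist _ [::] isT.
Definition FGgen n (i : 'I_n) : FG n := exist _ [:: (i, false)] isT.

Definition Hom (k l : nat) := {ffun 'I_l -> FG k}.

Definition subst k l (v : 'I_l -> FG k) (w : word l) : word k :=
  flatten (map (fun x : letter l => let u := val (v x.1) in
                                    if x.2 then winv u else u) w).

(* composition [k] --f--> [l] --h--> [p]  (i.e. h o f), by substitution *)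
Definition comp k l p (f : Hom k l) (h : Hom l p) : Hom k p :=
  [ffun j => mkFG (subst f (val (h j)))].

Definition idH k : Hom k k := [ffun j => FGgen j].

Record functorH := FunctorH {
  Fob :> nat -> Type;
  Fmap : forall k l, Hom k l -> Fob k -> Fob l;
  Fmap_id : forall k (x : Fob k), Fmap (idH k) x = x;
  Fmap_comp : forall k l p (f : Hom k l) (h : Hom l p) (x : Fob k),
      Fmap (comp f h) x = Fmap h (Fmap f x) }.

Record group := Group {
  gcar :> Type;
  gmul : gcar -> gcar -> gcar;
  ginv : gcar -> gcar;
  gone : gcar;
  gmulA : forall x y z, gmul x (gmul y z) = gmul (gmul x y) z;
  gmul1 : forall x, gmul gone x = x;
  gmulV : forall x, gmul (ginv x) x = gone }.

Definition evalw (G : group) n (g : 'I_n -> G) (w : word n) : G :=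
  foldr (fun (x : letter n) acc =>
           gmul (if x.2 then ginv (g x.1) else g x.1) acc) (gone G) w.

Inductive ncl n (r : nat -> FG n) : word n -> Prop :=
| ncl_nil : ncl r [::]
| ncl_conj i (u : word n) : ncl r (u ++ val (r i) ++ winv u)
| ncl_inv a : ncl r a -> ncl r (winv a)
| ncl_cat a b : ncl r a -> ncl r b -> ncl r (a ++ b).

Definition in_nclosure n (r : nat -> FG n) (w : FG n) :=
  exists a, ncl r a /\ reduce a = val w.

(* (G, g) is the group < g_1..g_n | r_0, r_1, ... >: the evaluation map
   F_n -> G, g_i |-> g i, is onto with kernel the normal closure of the r_i. *)
Definition presents (G : group) n (g : 'I_n -> G) (r : nat -> FG n) :=
  (forall x : G, exists w : FG n, evalw g (val w) = x) /\
  (forall w : FG n, evalw g (val w) = gone G <-> in_nclosure r w).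

Definition GamOb (G : group) (k : nat) := {ffun 'I_k -> G}.
Definition GamMap (G : group) k l (f : Hom k l) (x : GamOb G k) : GamOb G l :=
  [ffun j => evalw x (val (f j))].

Definition phi n (r : nat -> FG n) (i : nat) : Hom n n.+1 :=
  [ffun j : 'I_n.+1 => if insub (val j) is Some j' then FGgen j' else r i].

Definition nat_from_hn n (Fo : nat -> Type)
    (Fm : forall k l, Hom k l -> Fo k -> Fo l) (t : forall k, Hom n k -> Fo k) :=
  forall k l (f : Hom n k) (h : Hom k l), t l (comp f h) = Fm k l h (t k f).

Definition coequalizes n (r : nat -> FG n) (Fo : nat -> Type)
    (t : forall k, Hom n k -> Fo k) :=
  forall (i j k : nat) (f : Hom n.+1 k), t k (comp (phi r i) f) = t k (comp (phi r j) f).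

Definition nat_trans (Fo : nat -> Type) (Fm : forall k l, Hom k l -> Fo k -> Fo l)
    (Go : nat -> Type) (Gm : forall k l, Hom k l -> Go k -> Go l)
    (u : forall k, Fo k -> Go k) :=
  forall k l (h : Hom k l) (x : Fo k), u l (Fm k l h x) = Gm k l h (u k x).

Definition is_coequalizer n (r : nat -> FG n) (Qo : nat -> Type)
    (Qm : forall k l, Hom k l -> Qo k -> Qo l) (q : forall k, Hom n k -> Qo k) :=
  nat_from_hn Qm q /\ coequalizes r q /\
  forall (F : functorH) (t : forall k, Hom n k -> F k),
    nat_from_hn (@Fmap F) t -> coequalizes r t ->
    (exists u : forall k, Qo k -> F k,
        nat_trans Qm (@Fmap F) u /\ forall k (f : Hom n k), u k (q k f) = t k f) /\
    (forall u u' : forall k, Qo k -> F k,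
        nat_trans Qm (@Fmap F) u -> nat_trans Qm (@Fmap F) u' ->
        (forall k (f : Hom n k), u k (q k f) = t k f) ->
        (forall k (f : Hom n k), u' k (q k f) = t k f) ->
        forall k x, u k x = u' k x).

(* Main.v *)
Require Import Defs.
From mathcomp Require Import all_boot.
From Stdlib Require Import IndefiniteDescription.
Set Implicit Arguments. Unset Strict Implicit. Unset Printing Implicit Defensive.

Section Words.
Variable n : nat.
Implicit Types (x y : letter n) (w s a b u : word n).

Lemma linvK x : linv (linv x) = x.
Proof. by case: x => i []. Qed.

Lemma reduced_behead x w : reducedb (x :: w) -> reducedb w.
Proof. by case: w => //= y w /andP[]. Qed.

Lemma reduce_id w : reducedb w -> reduce w = w.
Proof.
elim: w => //= x w IH Hw.
rewrite IH; last exact: reduced_behead Hw.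
case: w Hw {IH} => //= y w /andP[Hy _].
by rewrite (negbTE Hy).
Qed.

Lemma push_push x s : reducedb s -> push x (push (linv x) s) = s.
Proof.
case: s => [|y s] /=; first by rewrite eqxx.
rewrite linvK; case: eqP => [->|Hy] Hs.
  case: s Hs => //= z s /andP[Hz _]. by rewrite (negbTE Hz).
by rewrite /= eqxx.
Qed.

Lemma reduce_cat a b : reduce (a ++ b) = foldr (@push n) (reduce b) a.
Proof. by rewrite /reduce foldr_cat. Qed.

Lemma reduce_catr a b : reduce (a ++ reduce b) = reduce (a ++ b).
Proof. by rewrite !reduce_cat reduce_id // reduce_reduced. Qed.

Lemma reduce_push_cat x s b : reduce (push x s ++ b) = push x (reduce (s ++ b)).
Proof.
case: s => [|y s] //=.
case: eqP => [->|_] //=.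
by rewrite push_push // reduce_reduced.
Qed.

Lemma reduce_catl a b : reduce (reduce a ++ b) = reduce (a ++ b).
Proof.
elim: a => //= x a IH.
by rewrite reduce_push_cat IH.
Qed.

Lemma winv_cons x u : winv (x :: u) = winv u ++ [:: linv x].
Proof. by rewrite /winv /= rev_cons cats1. Qed.

Lemma winvK u : winv (winv u) = u.
Proof.
rewrite /winv map_rev revK -map_comp.
by rewrite (eq_map (@linvK)) map_id.
Qed.

Lemma reduce_winv u b : reduce (u ++ winv u ++ b) = reduce b.
Proof.
elim: u b => //= x u IH b.
rewrite winv_cons -catA /= -[linv x :: b]/([:: linv x] ++ b) IH /=.
by rewrite push_push // reduce_reduced.
Qed.

Lemma reduce_winv' u b : reduce (winv u ++ u ++ b) = reduce b.
Proof. by rewrite -{2}(winvK u) reduce_winv. Qed.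

Lemma mkFG_val (a : FG n) : mkFG (val a) = a.
Proof. apply: val_inj => /=; exact: reduce_id (valP a). Qed.

Lemma mkFG_eq a b : reduce a = reduce b -> mkFG a = mkFG b.
Proof. by move=> H; apply: val_inj. Qed.
End Words.

Section Subst.
Variables k l : nat.
Variable v : 'I_l -> FG k.
Definition sl (x : letter l) : word k :=
  let u := val (v x.1) in if x.2 then winv u else u.

Lemma subst_cons x w : subst v (x :: w) = sl x ++ subst v w.
Proof. by []. Qed.
Lemma subst_cat a b : subst v (a ++ b) = subst v a ++ subst v b.
Proof. by rewrite /subst map_cat flatten_cat. Qed.

Lemma sl_linv x : sl (linv x) = winv (sl x).
Proof. by case: x => i [] /=; rewrite /sl /= ?winvK. Qed.

Lemma reduce_subst_push x s :
  reduce (subst v (push x s)) = reduce (sl x ++ subst v s).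
Proof.
case: s => [|y s] //=.
case: eqP => [->|_] //=.
by rewrite subst_cons sl_linv reduce_winv.
Qed.

Lemma reduce_subst w : reduce (subst v (reduce w)) = reduce (subst v w).
Proof.
elim: w => //= x w IH.
rewrite reduce_subst_push subst_cons -reduce_catr IH reduce_catr //.
Qed.
End Subst.

Section Grp.
Variable G : group.
Implicit Types x y z : G.
Local Notation "x * y" := (gmul x y).
Local Notation "1" := (gone G).

Lemma gmulV' x : x * ginv x = 1.
Proof.
set y := ginv x.
have yx : y * x = 1 by apply: gmulV.
transitivity ((ginv y * y) * (x * y)); first by rewrite gmulV gmul1.
by rewrite -gmulA (gmulA y x y) yx gmul1 gmulV.
Qed.

Lemma gmul1r x : x * 1 = x.
Proof. by rewrite -(gmulV x) gmulA gmulV' gmul1. Qed.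

Lemma ginv_uniq x d : d * x = 1 -> ginv x = d.
Proof.
move=> H; by rewrite -[ginv x]gmul1 -H -gmulA gmulV' gmul1r.
Qed.

Lemma ginvM x y : ginv (x * y) = ginv y * ginv x.
Proof.
apply: ginv_uniq.
by rewrite -gmulA (gmulA (ginv x)) gmulV gmul1 gmulV.
Qed.

Lemma ginv1 : ginv 1 = 1.
Proof. by apply: ginv_uniq; rewrite gmul1. Qed.

Lemma ginvK x : ginv (ginv x) = x.
Proof. by apply: ginv_uniq; rewrite gmulV'. Qed.

Variable n : nat.
Implicit Types (g : 'I_n -> G) (w a b : word n).

Definition lv g (x : letter n) : G := if x.2 then ginv (g x.1) else g x.1.

Lemma evalw_cons g (x : letter n) w : evalw g (x :: w) = lv g x * evalw g w.
Proof. by []. Qed.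

Lemma evalw_cat g a b : evalw g (a ++ b) = evalw g a * evalw g b.
Proof.
elim: a => [|x a IH] /=; first by rewrite gmul1.
by rewrite IH gmulA.
Qed.

Lemma evalw_winv g a : evalw g (winv a) = ginv (evalw g a).
Proof.
elim: a => [|x a IH]; first by rewrite ginv1.
rewrite winv_cons evalw_cat IH evalw_cons ginvM /= gmul1r.
by case: x => i [] /=; rewrite ?ginvK.
Qed.

Lemma evalw_push g (x : letter n) (s : word n) : evalw g (push x s) = lv g x * evalw g s.
Proof.
case: s => [|y s] //=.
case: eqP => [->|_] //=.
rewrite gmulA; case: x => i [] /=; by rewrite ?gmulV ?gmulV' gmul1.
Qed.

Lemma evalw_reduce g w : evalw g (reduce w) = evalw g w.
Proof. by elim: w => //= x w IH; rewrite (evalw_push g x) IH. Qed.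

Lemma evalw_ext g g' w : (forall i, g i = g' i) -> evalw g w = evalw g' w.
Proof. by move=> H; elim: w => //= x w ->; rewrite H. Qed.
End Grp.

Lemma evalw_subst (G : group) k l (g : 'I_k -> G) (v : 'I_l -> FG k) (w : word l) :
  evalw g (subst v w) = evalw (fun m => evalw g (val (v m))) w.
Proof.
elim: w => //= x w IH.
rewrite subst_cons evalw_cat IH /sl.
by case: x => i [] /=; rewrite ?evalw_winv.
Qed.

Section Main.
Variables (n : nat) (r : nat -> FG n).

Definition liftL (x : letter n) : letter n.+1 := (widen_ord (leqnSn n) x.1, x.2).
Definition liftw (w : word n) : word n.+1 := map liftL w.

Lemma winv_lift u : winv (liftw u) = liftw (winv u).
Proof. by rewrite /winv /liftw map_rev -!map_comp. Qed.

Lemma phi_lift i (x : letter n) : sl (phi r i) (liftL x) = [:: x].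
Proof.
rewrite /sl /phi ffunE /=.
have -> : insub (val x.1) = Some x.1 by rewrite valK.
by case: x => a [].
Qed.

Lemma subst_phi_lift i w : subst (phi r i) (liftw w) = w.
Proof. by elim: w => //= x w IH; rewrite subst_cons phi_lift IH. Qed.

Lemma subst_phi_max i : subst (phi r i) [:: (ord_max, false)] = val (r i).
Proof.
rewrite subst_cons cats0 /sl /phi ffunE /=.
by rewrite insubN // ltnn.
Qed.

Lemma comp_phi_conj k (f : Hom n k) (j : 'I_k) (u : word n) :
  let h : Hom n.+1 k := [ffun m => if m == j then
      mkFG (liftw u ++ (ord_max, false) :: winv (liftw u) ++ liftw (val (f j)))
      else mkFG (liftw (val (f m)))] in
  forall i, Defs.comp (phi r i) h =
    [ffun m => if m == j then mkFG ((u ++ val (r i) ++ winv u) ++ val (f m)) else f m].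
Proof.
move=> h i; apply/ffunP => m; rewrite !ffunE /=.
have vm (w : word n.+1) : sval (mkFG w) = reduce w by [].
case: eqP => [->|_]; last rewrite -[f m]mkFG_val; apply: mkFG_eq; rewrite vm reduce_subst.
  rewrite !subst_cat -cat1s subst_cat subst_phi_max winv_lift !subst_phi_lift.
  by rewrite subst_cat !subst_phi_lift -!catA.
by rewrite mkFG_val subst_phi_lift.
Qed.

Variables (Gam : group) (g : 'I_n -> Gam).
Hypothesis r0 : val (r 0) = [::].
Hypothesis pres : presents g r.


Lemma ncl_P (T : nat -> Type) (t : forall k, Hom n k -> T k) :
  coequalizes r t -> forall a, ncl r a -> forall k (f : Hom n k) j,
  t k f = t k [ffun m => if m == j then mkFG (a ++ val (f m)) else f m].
Proof.
move=> Hc a; elim => [|i u|a' Ha IH|a' b Ha IHa Hb IHb] k f j.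
- congr (t k _); apply/ffunP => m; rewrite ffunE.
  by case: eqP => // ->; rewrite mkFG_val.
- rewrite -(comp_phi_conj f j u i) (Hc i 0) (comp_phi_conj f j u 0) r0.
  congr (t k _); apply/ffunP => m; rewrite ffunE.
  case: eqP => // ->; rewrite -{1}(mkFG_val (f j)); apply: mkFG_eq.
  by rewrite cat0s -catA reduce_winv.
- rewrite [in RHS](IH k _ j); congr (t k _); apply/ffunP => m; rewrite !ffunE.
  case: eqP => [->|ne] //; rewrite -{1}(mkFG_val (f j)); apply: mkFG_eq.
  by rewrite reduce_catr reduce_winv.
- rewrite (IHb k f j) (IHa k _ j); congr (t k _); apply/ffunP => m; rewrite !ffunE.
  case: eqP => [->|ne] //; apply: mkFG_eq.
  by rewrite reduce_catr catA.
Qed.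

Lemma reduce_winv_self (u : word n) : reduce (winv u ++ u) = [::].
Proof. by have := reduce_winv' u [::]; rewrite cats0. Qed.

Lemma class_eq (T : nat -> Type) (t : forall k, Hom n k -> T k) :
  coequalizes r t -> forall k (f f' : Hom n k),
  (forall j, evalw g (val (f j)) = evalw g (val (f' j))) -> t k f = t k f'.
Proof.
move=> Hc k f f' H.
have step j : exists a, ncl r a /\ reduce (a ++ val (f j)) = val (f' j).
  pose c := val (f' j) ++ winv (val (f j)).
  have : in_nclosure r (mkFG c).
    apply: (proj1 (proj2 pres (mkFG c))).
    by rewrite /= evalw_reduce evalw_cat evalw_winv -H gmulV'.
  case=> a [Ha Ea]; exists a; split => //.
  rewrite -reduce_catl Ea reduce_catl /c -catA -reduce_catr reduce_winv_self cats0.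
  exact: reduce_id (valP (f' j)).
suff : forall p, p <= k -> t k f = t k [ffun m : 'I_k => if m < p then f' m else f m].
  move/(_ k (leqnn k)) => ->; apply: f_equal; apply/ffunP => m.
  by rewrite ffunE ltn_ord.
elim => [_|p IH lt].
  by apply: f_equal; apply/ffunP => m; rewrite ffunE ltn0.
rewrite IH; last exact: ltnW.
have [a [Ha Ea]] := step (Ordinal lt).
rewrite [LHS](ncl_P Hc Ha _ (Ordinal lt)); apply: f_equal; apply/ffunP => m.
rewrite !ffunE; case: eqP => [->|ne] /=.
  rewrite ltnn ltnSn; apply: val_inj; exact: Ea.
rewrite ltnS; case: ltngtP => // e.
by case: ne; apply: val_inj.
Qed.
End Main.

Theorem lemma3p2 (n : nat) (r : nat -> FG n) (Gam : group) (g : 'I_n -> Gam) :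
  val (r 0) = [::] ->
  presents g r ->
  exists q : forall k, Hom n k -> GamOb Gam k,
    is_coequalizer r (@GamMap Gam) q.
Proof.
move=> r0 pres.
pose q k (f : Hom n k) : GamOb Gam k := [ffun j => evalw g (val (f j))].
have qnat : nat_from_hn (@GamMap Gam) q.
  move=> k l f h; apply/ffunP => j; rewrite !ffunE /= evalw_reduce evalw_subst.
  by apply: evalw_ext => m; rewrite ffunE.
have rinv i : evalw g (val (r i)) = gone Gam.
  apply/(proj2 pres (r i)); exists ([::] ++ val (r i) ++ winv [::]); split.
    exact: ncl_conj.
  by rewrite /= cats0 reduce_id // (valP (r i)).
exists q; split => //; split.
  move=> i i' k f; apply/ffunP => j; rewrite !ffunE /= !evalw_reduce !evalw_subst.
  apply: evalw_ext => m; rewrite !ffunE.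
  by case: insub => [?|]; rewrite ?rinv.
move=> F t Hnat Hc.
have pk (x : Gam) : {w : FG n | evalw g (val w) = x}.
  exact: constructive_indefinite_description (proj1 pres x).
pose sec k (x : GamOb Gam k) : Hom n k := [ffun j => sval (pk (x j))].
have Hqs k x : q k (sec k x) = x.
  by apply/ffunP => j; rewrite !ffunE (svalP (pk (x j))).
have Hsq k f : t k (sec k (q k f)) = t k f.
  apply: (class_eq r0 pres Hc) => j.
  by rewrite ffunE (svalP (pk _)) ffunE.
split.
  exists (fun k x => t k (sec k x)); split => //.
  move=> k l h x /=.
  by rewrite -{1}(Hqs k x) -qnat Hsq Hnat.
move=> u u' _ _ Hu Hu' k x.
by rewrite -(Hqs k x) Hu Hu'.
Qed.
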